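(* Let $\mu_1,\mu_2$ be compactly supported positive Borel measures on $\mathbb{C}$, both with infinite support, and suppose both $\operatorname{supp}(\mu_1)$ and $\operatorname{supp}(\mu_2)$ are polynomially convex. If $0<\lambda(\mu_1,\mu_2)\le\beta(\mu_1,\mu_2)<\infty$, then $\operatorname{supp}(\mu_1)=\operatorname{supp}(\mu_2)$.
   Context: For positive Borel measures $\mu_1,\mu_2$ on $\mathbb{C}$ with finite moments and $\mu_2$ infinitely supported, $\lambda(\mu_1,\mu_2)=\inf\{\int|p|^2d\mu_1/\int|p|^2d\mu_2 : p\in\mathbb{P}[z]\setminus\{0\}\}$ and $\beta(\mu_1,\mu_2)=\sup\{\int|p|^2d\mu_1/\int|p|^2d\mu_2 : p\in\mathbb{P}[z]\setminus\{0\}\}$ (equivalently, limits of the smallest/largest generalized eigenvalues of the $(n+1)\times(n+1)$ truncations of the moment matrix $\mathbf{M}(\mu_1)=(\int z^i\bar z^jd\mu_1)$ with respect to those of $\mathbf{M}(\mu_2)$). A compact set $K\subset\mathbb{C}$ is polynomially convex if $K=\operatorname{Pc}(K)$, where $\operatorname{Pc}(K)=\{z: |p(z)|\le\max_K|p| \ \forall p\in\mathbb{P}[z]\}$. *)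

(* Defs.v *)
From HB Require Import structures.
From mathcomp Require Import all_boot all_order all_algebra.
From mathcomp Require Import all_classical all_reals all_analysis.
From mathcomp.real_closed Require Import complex.
Import Order.TTheory GRing.Theory Num.Theory.
Import numFieldNormedType.Exports.

Set Implicit Arguments.
Unset Strict Implicit.
Unset Printing Implicit Defensive.

Local Open Scope ring_scope.
Local Open Scope classical_set_scope.

(* The complex plane is modelled as R * R (with its product topology and
   product sigma-algebra = Borel sigma-algebra of R^2); [toC] identifies a
   point (x, y) with the complex number x + i y. *)
Definition toC (R : realType) (z : R * R) : R[i] := (z.1 +i* z.2)%C.

Definition cabs (R : realType) (w : R[i]) : R := Normc.normc w.

Definition msupp (R : realType) (mu : {measure set (R * R) -> \bar R})
  : set (R * R) :=
  [set z | forall U : set (R * R), open U -> U z -> (0 < mu U)%E].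

Definition finite_moments (R : realType) (mu : {measure set (R * R) -> \bar R})
  : Prop :=
  forall n : nat, (\int[mu]_z ((cabs (toC z)) ^+ n)%:E < +oo)%E.

Definition L2sq (R : realType) (mu : {measure set (R * R) -> \bar R})
  (p : {poly R[i]}) : \bar R :=
  (\int[mu]_z ((cabs p.[toC z]) ^+ 2)%:E)%E.

(* the Rayleigh quotient  int |p|^2 dmu1 / int |p|^2 dmu2  (both integrals
   are finite real numbers under the standing assumptions) *)
Definition rquot (R : realType) (mu1 mu2 : {measure set (R * R) -> \bar R})
  (p : {poly R[i]}) : \bar R :=
  (fine (L2sq mu1 p) / fine (L2sq mu2 p))%:E.

Definition lambda_mm (R : realType) (mu1 mu2 : {measure set (R * R) -> \bar R})
  : \bar R :=
  ereal_inf [set rquot mu1 mu2 p | p in [set p : {poly R[i]} | p != 0]].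

Definition beta_mm (R : realType) (mu1 mu2 : {measure set (R * R) -> \bar R})
  : \bar R :=
  ereal_sup [set rquot mu1 mu2 p | p in [set p : {poly R[i]} | p != 0]].

Definition Pc (R : realType) (K : set (R * R)) : set (R * R) :=
  [set z | forall p : {poly R[i]},
     cabs p.[toC z] <= sup [set cabs p.[toC w] | w in K]].

Definition poly_convex (R : realType) (K : set (R * R)) : Prop := Pc K = K.

(* Main.v *)
Require Import Defs.
From HB Require Import structures.
From mathcomp Require Import all_boot all_order all_algebra.
From mathcomp Require Import all_classical all_reals all_analysis.
From mathcomp.real_closed Require Import complex.
From mathcomp Require Import ring lra measurable_realfun.
Import Order.TTheory GRing.Theory Num.Theory.
Import numFieldNormedType.Exports.
Local Open Scope ring_scope.
Local Open Scope classical_set_scope.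

Set Implicit Arguments.
Unset Strict Implicit.
Section S.
Variable R : realType.
Definition box (q : rat*rat*rat*rat) : set (R*R) :=
  `]ratr q.1.1.1, ratr q.1.1.2[ `*` `]ratr q.1.2, ratr q.2[.

Lemma box_sub (U : set (R*R)) z : open U -> U z -> exists q, box q z /\ box q `<=` U.
Proof.
move=> oU Uz.
have : nbhs z U by apply: open_nbhs_nbhs; split.
move=> /nbhs_ballP[_/posnumP[e] zeU].
have [a] := @rat_in_itvoo R (z.1 - e%:num) z.1 ltac:(by rewrite ltrBlDr ltrDl).
rewrite in_itv /= => /andP[a1 a2].
have [b] := @rat_in_itvoo R z.1 (z.1 + e%:num) ltac:(by rewrite ltrDl).
rewrite in_itv /= => /andP[b1 b2].
have [c] := @rat_in_itvoo R (z.2 - e%:num) z.2 ltac:(by rewrite ltrBlDr ltrDl).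
rewrite in_itv /= => /andP[c1 c2].
have [d] := @rat_in_itvoo R z.2 (z.2 + e%:num) ltac:(by rewrite ltrDl).
rewrite in_itv /= => /andP[d1 d2].
exists (a,b,c,d); split.
  by split; rewrite /= in_itv /= ?a2 ?b1 ?c2 ?d1.
move=> w [/=]; rewrite !in_itv /= => /andP[w1 w2] /andP[w3 w4].
apply: zeU; split; rewrite /ball /= ltr_distl; apply/andP; split; lra.
Qed.

Definition boxn (P : set (R*R) -> Prop) (n : nat) : set (R*R) :=
  if unpickle n is Some q then (if `[< P (box q) >] then box q else set0) else set0.

Lemma box_measurable q : measurable (box q).
Proof. by apply: measurableX; exact: measurable_itv. Qed.

Lemma bigcup_boxn (U : set (R*R)) (P : set (R*R) -> Prop) :
  (forall z, U z -> exists q, box q z /\ P (box q)) -> U `<=` \bigcup_n boxn P n.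
Proof.
move=> H z /H[q [bz Pq]]; exists (pickle q); first exact I.
rewrite /boxn pickleK; case: asboolP => [_|/(_ Pq) []]; exact: bz.
Qed.

Lemma open_measurable2 (U : set (R*R)) : open U -> measurable U.
Proof.
move=> oU.
have -> : U = \bigcup_n boxn (fun B => B `<=` U) n.
  apply/seteqP; split.
    apply: bigcup_boxn => z Uz; have [q [? ?]] := box_sub oU Uz; by exists q.
  move=> z [n _]; rewrite /boxn; case: unpickle => [q|[]].
  by case: asboolP => [+ bz|_ []]; apply.
apply: bigcupT_measurable => n; rewrite /boxn; case: unpickle => [q|]; last exact: measurable0.
case: asboolP => _; [exact: box_measurable|exact: measurable0].
Qed.

Lemma outside_negligible (mu : {measure set (R * R) -> \bar R}) (A : set (R*R)) :
  (forall z, A z -> ~ msupp mu z) -> mu.-negligible A.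
Proof.
move=> H.
apply: (@negligibleS _ _ _ _ (\bigcup_n boxn
   (fun B => exists W, [/\ open W, mu W = 0%E & B `<=` W]) n)).
  apply: bigcup_boxn => z /H; rewrite /msupp /= => /existsNP[W] /not_implyP[oW]
    /not_implyP[Wz] /negP; rewrite -leNgt => W0.
  have [q [bz bW]] := box_sub oW Wz; exists q; split => //; exists W; split => //.
  by apply/le_anti; rewrite W0 measure_ge0.
apply: negligible_bigcup => n; rewrite /boxn; case: unpickle => [q|]; last exact: negligible_set0.
case: asboolP => [[W [oW W0 bW]]|_]; last exact: negligible_set0.
by exists W; split => //; exact: open_measurable2.
Qed.

Definition pre (p : {poly R[i]}) (z : R * R) : R := complex.Re p.[toC z].
Definition pim (p : {poly R[i]}) (z : R * R) : R := complex.Im p.[toC z].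

Lemma ReM (x y : R[i]) : complex.Re (x * y) = complex.Re x * complex.Re y - complex.Im x * complex.Im y.
Proof. by case: x => a b; case: y => c d. Qed.
Lemma ImM (x y : R[i]) : complex.Im (x * y) = complex.Re x * complex.Im y + complex.Im x * complex.Re y.
Proof. by case: x => a b; case: y => c d. Qed.
Lemma ReD (x y : R[i]) : complex.Re (x + y) = complex.Re x + complex.Re y.
Proof. by case: x => a b; case: y => c d. Qed.
Lemma ImD (x y : R[i]) : complex.Im (x + y) = complex.Im x + complex.Im y.
Proof. by case: x => a b; case: y => c d. Qed.

Lemma fst_cont : continuous (@fst R R).
Proof. by move=> z; exact: cvg_fst. Qed.
Lemma snd_cont : continuous (@snd R R).
Proof. by move=> z; exact: cvg_snd. Qed.

Lemma parts_ok (p : {poly R[i]}) :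
  [/\ continuous (pre p), continuous (pim p),
      measurable_fun setT (pre p) & measurable_fun setT (pim p)].
Proof.
elim/poly_ind: p => [|p c [c1 c2 m1 m2]].
  have -> : pre 0 = cst 0 by apply/funext => z; rewrite /pre horner0.
  have -> : pim 0 = cst 0 by apply/funext => z; rewrite /pim horner0.
  split; [move=> z; exact: cst_continuous|move=> z; exact: cst_continuous|exact: measurable_cst|exact: measurable_cst].
have -> : pre (p * 'X + c%:P) =
    (pre p \* fst) \- (pim p \* snd) \+ cst (complex.Re c).
  by apply/funext => z; rewrite /pre /pim hornerMXaddC ReD ReM.
have -> : pim (p * 'X + c%:P) =
    (pre p \* snd) \+ (pim p \* fst) \+ cst (complex.Im c).
  by apply/funext => z; rewrite /pre /pim hornerMXaddC ImD ImM.
split.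
- move=> z; apply: continuousD; last exact: cst_continuous.
  apply: continuousB; apply: continuousM; [exact: c1|exact: fst_cont|exact: c2|exact: snd_cont].
- move=> z; apply: continuousD; last exact: cst_continuous.
  apply: continuousD; apply: continuousM; [exact: c1|exact: snd_cont|exact: c2|exact: fst_cont].
- apply: measurable_funD; last exact: measurable_cst.
  apply: measurable_funB; apply: measurable_funM;
    [exact: m1|exact: measurable_fst|exact: m2|exact: measurable_snd].
- apply: measurable_funD; last exact: measurable_cst.
  apply: measurable_funD; apply: measurable_funM;
    [exact: m1|exact: measurable_snd|exact: m2|exact: measurable_fst].
Qed.

Definition G (p : {poly R[i]}) (z : R * R) : R := pre p z ^+ 2 + pim p z ^+ 2.

Lemma cabsE (w : R[i]) : cabs w = Num.sqrt (complex.Re w ^+ 2 + complex.Im w ^+ 2).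
Proof. by case: w. Qed.

Lemma cabs_ge0 (w : R[i]) : 0 <= cabs w.
Proof. by rewrite cabsE sqrtr_ge0. Qed.

Lemma cabs_sq p z : cabs p.[toC z] ^+ 2 = G p z.
Proof. by rewrite cabsE sqr_sqrtr // addr_ge0 // sqr_ge0. Qed.

Lemma G_ge0 p z : 0 <= G p z.
Proof. by rewrite /G addr_ge0 // sqr_ge0. Qed.

Lemma cabsX (w : R[i]) n : cabs (w ^+ n) = cabs w ^+ n.
Proof.
elim: n => [|n IH]; first by rewrite !expr0 cabsE /= expr1n expr0n /= addr0 sqrtr1.
by rewrite /cabs in IH *; rewrite !exprS Normc.normcM IH.
Qed.

Lemma G_ok p : continuous (G p) /\ measurable_fun setT (G p).
Proof.
have [c1 c2 m1 m2] := parts_ok p.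
have -> : G p = (pre p \* pre p) \+ (pim p \* pim p).
  by apply/funext => z; rewrite /G !expr2.
split.
  move=> z; apply: continuousD; apply: continuousM; [exact: c1|exact: c1|exact: c2|exact: c2].
by apply: measurable_funD; apply: measurable_funM.
Qed.

Lemma L2sqX (mu : {measure set (R * R) -> \bar R}) p n :
  L2sq mu (p ^+ n) = (\int[mu]_z ((G p z) ^+ n)%:E)%E.
Proof.
rewrite /L2sq; apply: eq_integral => z _.
by rewrite horner_exp cabsX -exprM mulnC exprM cabs_sq.
Qed.

Lemma L2sq1 (mu : {measure set (R * R) -> \bar R}) : L2sq mu 1 = mu setT.
Proof.
rewrite /L2sq.
have -> : (fun z : R * R => ((cabs (1 : {poly R[i]}).[toC z]) ^+ 2)%:E) = cst 1%E.
  apply/funext => z; rewrite hornerC cabsE /= expr1n expr0n /= addr0 sqrtr1 expr1n //.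
by rewrite integral_cst // mul1e.
Qed.

Lemma bernoulli (h : R) n : 0 <= h -> 1 + n%:R * h <= (1 + h) ^+ n.
Proof.
move=> h0; elim: n => [|n IH]; first by rewrite mul0r addr0 expr0.
rewrite exprS -natr1; have : 0 <= (n%:R : R) by [].
nra.
Qed.

Lemma growth (s t u B C : R) : 0 < s -> s < t -> 0 < u ->
  (forall n, t ^+ n * u <= C * (s ^+ n * B)) -> False.
Proof.
move=> s0 st u0 H.
set h := t / s - 1.
have h0 : 0 < h by rewrite /h subr_gt0 ltr_pdivlMr // mul1r.
have Hn n : (n%:R * h) * u <= C * B.
  have := H n; rewrite -(@ler_pM2r _ (s ^+ n)^-1) ?invr_gt0 ?exprn_gt0 //.
  have -> : C * (s ^+ n * B) * (s ^+ n)^-1 = C * B.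
    by field; rewrite expf_neq0 // gt_eqF.
  have -> : t ^+ n * u * (s ^+ n)^-1 = (t / s) ^+ n * u.
    by rewrite exprMn exprVn mulrAC.
  have E : 1 + h = t / s by rewrite /h addrC subrK.
  have := bernoulli n (ltW h0); rewrite E => Hb Hc.
  apply: le_trans Hc; rewrite ler_pM2r //; apply: le_trans Hb; rewrite lerDr //.
set x := C * B / (h * u).
have hu : 0 < h * u by rewrite mulr_gt0.
have := archi_boundP (normr_ge0 x).
set n := Num.bound _ => xn.
have := Hn n; rewrite -mulrA -ler_pdivlMr // -/x => nx.
have := ler_norm x; lra.
Qed.

Lemma fin_pos (x : \bar R) : (0 <= x)%E -> 0 < fine x -> x = (fine x)%:E.
Proof. by case: x => // _; rewrite ltxx. Qed.

Lemma L2sq_ge0 (mu : {measure set (R * R) -> \bar R}) p : (0 <= L2sq mu p)%E.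
Proof. by apply: integral_ge0 => z _; rewrite lee_fin exprn_ge0 // cabs_ge0. Qed.

Lemma Gn_meas p n (D : set (R * R)) : measurable D ->
  measurable_fun D (fun z => ((G p z) ^+ n)%:E).
Proof.
move=> mD; apply/measurable_EFinP; apply: (@measurable_funX _ _ _ _ (G p)).
have [_ Gm] := G_ok p.
exact: (measurable_funS measurableT (subsetT D) Gm).
Qed.

Lemma core (mu1 mu2 : {measure set (R * R) -> \bar R}) (C : R) :
  (forall p : {poly R[i]}, p != 0 ->
     [/\ 0 < fine (L2sq mu1 p), 0 < fine (L2sq mu2 p)
       & fine (L2sq mu1 p) <= C * fine (L2sq mu2 p)]) ->
  msupp mu2 !=set0 -> compact (msupp mu2) -> Pc (msupp mu2) = msupp mu2 ->
  msupp mu1 `<=` msupp mu2.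
Proof.
move=> H [w0 K2w0] cK2 pc2 z0 K1z0.
apply: contrapT => nK2.
have : ~ Pc (msupp mu2) z0 by rewrite pc2.
rewrite /Pc /= => /existsNP[p] /negP; rewrite -ltNge => Sa.
have [Gc Gm] := G_ok p.
have [M HM] : exists M, forall w, msupp mu2 w -> G p w <= M.
  have cG : compact (G p @` msupp mu2).
    by apply: continuous_compact => //; exact: continuous_subspaceT.
  have := compact_bounded cG; case=> M [_ HM]; exists (`|M| + 1) => w Kw.
  have := HM (`|M| + 1) ltac:(by rewrite (le_lt_trans (ler_norm M)) // ltrDl) (G p w).
  by move=> /(_ (ex_intro2 _ _ w Kw erefl)) /=; rewrite ger0_norm // G_ge0.
set S := sup _ in Sa.
have hs : has_sup [set cabs p.[toC w] | w in msupp mu2].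
  split; first by exists (cabs p.[toC w0]), w0.
  exists (1 + M) => _ [w Kw <-].
  have := cabs_sq p w; have := HM w Kw; have := cabs_ge0 p.[toC w]; nra.
have bnd w : msupp mu2 w -> cabs p.[toC w] <= S.
  by move=> Kw; apply: sup_upper_bound hs _ _; exists w.
have S0 : 0 <= S by apply: le_trans (bnd w0 K2w0); exact: cabs_ge0.
have p0 : p != 0.
  apply/eqP => p0; move: Sa (bnd w0 K2w0); rewrite p0 !horner0; lra.
set a := cabs p.[toC z0] in Sa.
have a2 : a ^+ 2 = G p z0 by rewrite /a cabs_sq.
pose s := (2 * S + a) / 3; pose t := (S + 2 * a) / 3.
have s0 : 0 < s by rewrite /s; lra.
have st : s < t by rewrite /s /t; lra.
have ta : t < a by rewrite /t; lra.
pose U := G p @^-1` `]t ^+ 2, +oo[.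
have oU : open U.
  by apply: open_comp; [move=> z _; exact: Gc|exact: interval_open].
have mU : measurable U := open_measurable2 oU.
have Uz0 : U z0.
  by rewrite /U /= in_itv /= andbT -a2; rewrite ltrXn2r //; lra.
have U0 := K1z0 U oU Uz0.
pose O := G p @^-1` `]s ^+ 2, +oo[.
have Oneg : mu2.-negligible O.
  apply: outside_negligible => z; rewrite /O /= in_itv /= andbT => sG K2z.
  have := bnd z K2z; have := cabs_sq p z; have := cabs_ge0 p.[toC z].
  move=> c0 cG cS; have : cabs p.[toC z] ^+ 2 < s ^+ 2.
    by rewrite ltrXn2r //; rewrite /s; lra.
  lra.
have [_ m2p _] := H 1 (oner_neq0 _).
have [m1p _ _] := H 1 (oner_neq0 _).
rewrite !L2sq1 in m2p m1p.
have E1 := fin_pos (measure_ge0 mu1 setT) m1p.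
have E2 := fin_pos (measure_ge0 mu2 setT) m2p.
have U1 : (mu1 U <= mu1 setT)%E.
  by apply: le_measure; rewrite ?inE //; exact: measurableT.
have EU : mu1 U = (fine (mu1 U))%:E.
  by move: U1; rewrite E1; case: (mu1 U) U0.
have u0 : 0 < fine (mu1 U) by move: U0; rewrite EU lte_fin.
have pn n : p ^+ n != 0 := expf_neq0 n p0.
have lower n : (t ^+ 2) ^+ n * fine (mu1 U) <= fine (L2sq mu1 (p ^+ n)).
  have [A1 _ _] := H _ (pn n).
  have EA := fin_pos (L2sq_ge0 mu1 (p ^+ n)) A1.
  suff : (((t ^+ 2) ^+ n * fine (mu1 U))%:E <= L2sq mu1 (p ^+ n))%E.
    by rewrite {1}EA lee_fin.
  rewrite L2sqX EFinM -EU -integral_cst //.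
  apply: (@le_trans _ _ (\int[mu1]_(z in U) ((G p z) ^+ n)%:E)%E).
    apply: ge0_le_integral => //;
      try (by move=> z _; rewrite lee_fin exprn_ge0 // ?sqr_ge0 ?G_ge0);
      try exact: Gn_meas; try exact: measurable_cst.
    move=> z; rewrite /U /= in_itv /= andbT => tG; rewrite lee_fin.
      by apply: lerXn2r; rewrite ?nnegrE ?sqr_ge0 ?G_ge0 // ltW.
  apply: ge0_subset_integral => //.
  - exact: Gn_meas.
  - by move=> z _; rewrite lee_fin exprn_ge0 // G_ge0.
have upper n : fine (L2sq mu1 (p ^+ n)) <= C * ((s ^+ 2) ^+ n * fine (mu2 setT)).
  have [A1 B1 AB] := H _ (pn n).
  have C0 : 0 <= C.
    rewrite leNgt; apply/negP => C0.
    have : C * fine (L2sq mu2 (p ^+ n)) < 0 by rewrite nmulr_rlt0.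
    by move=> h; have := lt_le_trans A1 AB; rewrite ltNge (ltW h).
  apply: le_trans (AB) _.
  rewrite ler_wpM2l //.
  have EB := fin_pos (L2sq_ge0 mu2 (p ^+ n)) B1.
  suff : (L2sq mu2 (p ^+ n) <= ((s ^+ 2) ^+ n * fine (mu2 setT))%:E)%E.
    by rewrite {1}EB lee_fin.
  rewrite L2sqX EFinM -E2 -integral_cst //.
  apply: ae_ge0_le_integral => //;
    try (by move=> z _; rewrite lee_fin exprn_ge0 // ?sqr_ge0 ?G_ge0);
    try exact: Gn_meas; try exact: measurable_cst.
  apply: (negligibleS _ Oneg) => z /= nz; rewrite /O /= in_itv /= andbT.
  rewrite ltNge; apply/negP => Gs; apply: nz => _; rewrite lee_fin.
  by apply: lerXn2r; rewrite ?nnegrE ?sqr_ge0 ?G_ge0.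
apply: (@growth (s ^+ 2) (t ^+ 2) (fine (mu1 U)) (fine (mu2 setT)) C).
- by rewrite exprn_gt0.
- by rewrite ltrXn2r //; lra.
- exact: u0.
- move=> n; exact: le_trans (lower n) (upper n).
Qed.

Lemma quot_facts (l b A B : R) : 0 < l -> 0 <= B -> l <= A / B -> A / B <= b ->
  [/\ 0 < A, 0 < B, A <= b * B & B <= l^-1 * A].
Proof.
move=> l0 B0 lq qb.
have Bp : 0 < B.
  rewrite lt_neqAle B0 andbT; apply/eqP => B00; move: lq.
  by rewrite -B00 invr0 mulr0 leNgt l0.
move: lq qb; rewrite ler_pdivlMr // ler_pdivrMr // => lq qb.
have lB := mulr_gt0 l0 Bp.
split => //; first lra.
by rewrite -ler_pdivrMl ?invr_gt0 // invrK.
Qed.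

Lemma nonempty_of_infinite (A : set (R * R)) : infinite_set A -> A !=set0.
Proof.
move=> inf; case: (pselect (A !=set0)) => // h; exfalso; apply: inf.
suff -> : A = set0 by exact: finite_set0.
by apply/seteqP; split => // z Az; apply: h; exists z.
Qed.
End S.
Unset Implicit Arguments.
Set Strict Implicit.

Theorem corollary2 (R : realType) (mu1 mu2 : {measure set (R * R) -> \bar R}) :
  finite_moments mu1 -> finite_moments mu2 ->
  compact (msupp mu1) -> compact (msupp mu2) ->
  infinite_set (msupp mu1) -> infinite_set (msupp mu2) ->
  poly_convex (msupp mu1) -> poly_convex (msupp mu2) ->
  (0 < lambda_mm mu1 mu2)%E -> (lambda_mm mu1 mu2 <= beta_mm mu1 mu2)%E ->
  (beta_mm mu1 mu2 < +oo)%E ->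
  msupp mu1 = msupp mu2.
Proof.
move=> _ _ c1 c2 i1 i2 pc1 pc2 hl hlb hb.
have Hq p : p != 0 ->
    (lambda_mm mu1 mu2 <= rquot mu1 mu2 p)%E /\ (rquot mu1 mu2 p <= beta_mm mu1 mu2)%E.
  move=> p0; split.
    by apply: ereal_inf_lbound; exists p.
  by apply: ereal_sup_ubound; exists p.
move: (lambda_mm mu1 mu2) (beta_mm mu1 mu2) Hq hl hlb hb => L Bt Hq hl hlb hb.
case: L Hq hl hlb => [l| |] Hq hl hlb //.
  case: Bt Hq hlb hb => [b| |] Hq hlb hb //.
  have Hf p : p != 0 -> [/\ 0 < fine (L2sq mu1 p), 0 < fine (L2sq mu2 p),
      fine (L2sq mu1 p) <= b * fine (L2sq mu2 p)
    & fine (L2sq mu2 p) <= l^-1 * fine (L2sq mu1 p)].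
    move=> p0; have [h1 h2] := Hq p p0; move: h1 h2; rewrite /rquot !lee_fin => h1 h2.
    by apply: quot_facts => //; try (by rewrite -lte_fin); apply: fine_ge0; exact: L2sq_ge0.
  apply/seteqP; split.
    apply: (@core R mu1 mu2 b) => //; last exact: nonempty_of_infinite.
    by move=> p p0; have [? ? ? ?] := Hf p p0; split.
  apply: (@core R mu2 mu1 l^-1) => //; last exact: nonempty_of_infinite.
  by move=> p p0; have [? ? ? ?] := Hf p p0; split.
by move: hb; rewrite ltNge leye_eq -leye_eq hlb.
Qed.
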